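(* In the adversarial edge arrival model for fractional matchings, no online algorithm achieves a guarantee larger than $0.58884$ on bipartite graphs of maximum degree four. In particular, since $0.58884 < \frac{4}{9-\sqrt5}$, the guarantee $\frac{4}{9-\sqrt5}$ is not achievable on graphs of maximum degree four.
   Context: Adversarial edge arrival model for fractional matchings: edges arrive one at a time in an adversarial order; on arrival of $e$ the algorithm irrevocably assigns $y_e\ge0$ so that for every vertex $w$, $\sum_{f\in\delta(w)}y_f\le 1$ at all times. An algorithm achieves guarantee $\gamma$ if at every timepoint $\sum_e y_e\ge\gamma\,\nu(G_t)$, where $\nu(G_t)$ is the maximum matching cardinality of the graph of arrived edges. *)

(* Defs.v *)
From HB Require Import structures.
From mathcomp Require Import all_boot all_order all_algebra.
From mathcomp Require Import reals.
Set Implicit Arguments. Unset Strict Implicit. Unset Printing Implicit Defensive.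
Import Order.TTheory GRing.Theory Num.Theory.
Local Open Scope ring_scope.

(* Bipartite graphs: vertices are left vertices (nat) and right vertices (nat);
   an edge (u, v) joins left vertex u to right vertex v. *)
Definition edge := (nat * nat)%type.

Definition admissible (s : seq edge) : bool :=
  uniq s &&
  all (fun e => (count (fun f : edge => f.1 == e.1) s <= 4)%N &&
                (count (fun f : edge => f.2 == e.2) s <= 4)%N) s.

Definition is_matching (M : seq edge) : bool :=
  uniq (map fst M) && uniq (map snd M).

Definition nu (s : seq edge) : nat :=
  \max_(b : (size s).-tuple bool | is_matching (mask b s)) size (mask b s).

(* A deterministic online algorithm: given the sequence of edges arrived so
   far (the last one being the edge just arriving), it outputs the value y_e
   for the arriving edge. Assignments are therefore irrevocable, and depend
   only on the past. *)
Definition online_alg (R : realType) := seq edge -> R.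

(* Value assigned to the i-th (0-based) arriving edge of s. *)
Definition yval (R : realType) (alg : online_alg R) (s : seq edge) (i : nat) : R :=
  alg (take i.+1 s).

Definition frac_feasible (R : realType) (alg : online_alg R) (p : seq edge) : Prop :=
  (forall i, (i < size p)%N -> 0 <= yval alg p i) /\
  (forall u : nat, \sum_(i < size p | (nth (0, 0)%N p i).1 == u) yval alg p i <= 1) /\
  (forall v : nat, \sum_(i < size p | (nth (0, 0)%N p i).2 == v) yval alg p i <= 1).

Definition frac_value (R : realType) (alg : online_alg R) (p : seq edge) : R :=
  \sum_(i < size p) yval alg p i.

Definition achieves (R : realType) (alg : online_alg R) (gamma : R) : Prop :=
  forall (s : seq edge) (t : nat), admissible s -> (t <= size s)%N ->
    frac_feasible alg (take t s) /\
    gamma * (nu (take t s))%:R <= frac_value alg (take t s).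

(* Main.v *)
Require Import Defs.
From HB Require Import structures.
From mathcomp Require Import all_boot all_order all_algebra.
From mathcomp Require Import reals.
From Stdlib Require NArith Lia.
From mathcomp Require Import lra.
Import Order.TTheory GRing.Theory Num.Theory.
Local Open Scope ring_scope.

Module Cert.
Notation NN := BinNums.N.
Definition gent := (NN * seq edge * seq bool)%type.
Definition cent := (NN * seq edge * (bool * nat))%type.
Definition lf := seq (NN * seq edge).

Definition val_lf (c : NN) (s : seq edge) : lf :=
  [seq (c, take i.+1 s) | i <- iota 0 (size s)].
Definition wsel (w : bool * nat) (e : edge) : bool :=
  (if w.1 then e.1 else e.2) == w.2.
Definition cap_lf (c : NN) (s : seq edge) (w : bool * nat) : lf :=
  [seq (c, take i.+1 s) | i <- iota 0 (size s) & wsel w (nth (0, 0)%N s i)].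
Definition A_lf (G : seq gent) : lf := flatten [seq val_lf x.1.1 x.1.2 | x <- G].
Definition B_lf (C : seq cent) : lf := flatten [seq cap_lf x.1.1 x.1.2 x.2 | x <- C].
Fixpoint coefN (l : lf) (p : seq edge) : NN :=
  match l with
  | [::] => BinNums.N0
  | x :: l' => if x.2 == p then BinNat.N.add x.1 (coefN l' p) else coefN l' p
  end.
Definition Msum (G : seq gent) : NN :=
  foldr (fun x acc => BinNat.N.add (BinNat.N.mul x.1.1 (BinNat.N.of_nat (size (mask x.2 x.1.2)))) acc) BinNums.N0 G.
Definition Usum (C : seq cent) : NN := foldr (fun x acc => BinNat.N.add x.1.1 acc) BinNums.N0 C.

Definition check (G : seq gent) (C : seq cent) (K : seq (seq edge)) (num den : NN) : bool :=
  all (fun x => [&& admissible x.1.2, size x.2 == size x.1.2 & is_matching (mask x.2 x.1.2)]) G &&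
  all (fun x => admissible x.1.2) C &&
  uniq K && all (fun x => x.2 \in K) (A_lf G ++ B_lf C) &&
  all (fun p => BinNat.N.leb (coefN (A_lf G) p) (coefN (B_lf C) p)) K &&
  BinNat.N.ltb BinNums.N0 (Msum G) && BinNat.N.ltb BinNums.N0 den && BinNat.N.leb (BinNat.N.mul (Usum C) den) (BinNat.N.mul num (Msum G)).

Section Sound.
Variable R : realType.
Variable alg : online_alg R.

Definition evl (l : lf) : R := \sum_(x <- l) (BinNat.N.to_nat x.1)%:R * alg x.2.

Lemma evl_cat l1 l2 : evl (l1 ++ l2) = evl l1 + evl l2.
Proof. by rewrite /evl big_cat. Qed.

Lemma evl_flatten (T : Type) (f : T -> lf) (r : seq T) :
  evl (flatten (map f r)) = \sum_(x <- r) evl (f x).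
Proof.
elim: r => [|x r IH]; first by rewrite /evl !big_nil.
by rewrite /= evl_cat IH big_cons.
Qed.

Lemma coefN_cons x l p :
  BinNat.N.to_nat (coefN (x :: l) p) = ((x.2 == p) * BinNat.N.to_nat x.1 + BinNat.N.to_nat (coefN l p))%N.
Proof.
rewrite /=; case: eqP => _ /=; last by rewrite mul0n add0n.
by rewrite Nnat.N2Nat.inj_add mul1n.
Qed.

Lemma evl_coef (l : lf) (K : seq (seq edge)) : uniq K -> all (fun x => x.2 \in K) l ->
  evl l = \sum_(p <- K) (BinNat.N.to_nat (coefN l p))%:R * alg p.
Proof.
move=> uK; elim: l => [|x l IH] /=.
  by move=> _; rewrite /evl big_nil big1 // => p _; rewrite mul0r.
case/andP=> xK /IH {}IH.
rewrite /evl big_cons -/(evl l) IH.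
under eq_bigr => p _ do rewrite coefN_cons natrD mulrDl.
rewrite big_split /=; congr (_ + _).
rewrite (bigD1_seq x.2) //= eqxx mul1n big1 ?addr0 // => p /negPf.
by rewrite eq_sym => ->; rewrite mul0n mul0r.
Qed.

Lemma nonneg_of (s : seq edge) (gamma : R) i :
  achieves alg gamma -> admissible s -> (i < size s)%N -> 0 <= alg (take i.+1 s).
Proof.
move=> H ad lt; have [[Hf _] _] := H s (size s) ad (leqnn _).
by have := Hf i; rewrite take_size; apply.
Qed.

Lemma evl_val c s : evl (val_lf c s) = (BinNat.N.to_nat c)%:R * frac_value alg s.
Proof.
rewrite /evl /val_lf big_map /frac_value mulr_sumr /yval.
by rewrite -(big_mkord xpredT (fun i => (BinNat.N.to_nat c)%:R * alg (take i.+1 s))) /index_iota subn0.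
Qed.

Lemma evl_cap c s w : evl (cap_lf c s w) =
  (BinNat.N.to_nat c)%:R * \sum_(i < size s | wsel w (nth (0, 0)%N s i)) yval alg s i.
Proof.
rewrite /evl /cap_lf big_map big_filter mulr_sumr /yval.
by rewrite -(big_mkord (fun i => wsel w (nth (0, 0)%N s i)) (fun i => (BinNat.N.to_nat c)%:R * alg (take i.+1 s))) /index_iota subn0.
Qed.

Lemma cap_le1 (gamma : R) s w : achieves alg gamma -> admissible s ->
  \sum_(i < size s | wsel w (nth (0, 0)%N s i)) yval alg s i <= 1.
Proof.
move=> H ad; have [[_ [Hu Hv]] _] := H s (size s) ad (leqnn _).
rewrite take_size in Hu Hv.
by case: w => [[] x]; rewrite /wsel /=; [apply: Hu | apply: Hv].
Qed.

Lemma nu_ge s (b : seq bool) : size b == size s -> is_matching (mask b s) ->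
  (size (mask b s) <= nu s)%N.
Proof.
move=> sb m; rewrite /nu.
pose t : (size s).-tuple bool := Tuple sb.
have -> : mask b s = mask t s by [].
exact: (@leq_bigmax_cond _ (fun t : (size s).-tuple bool => is_matching (mask t s))
         (fun t : (size s).-tuple bool => size (mask t s)) t m).
Qed.

Lemma mem_B_nonneg (gamma : R) C x : achieves alg gamma ->
  all (fun x => admissible x.1.2) C -> x \in B_lf C -> 0 <= alg x.2.
Proof.
move=> H /allP adC /flatten_mapP [y yC].
rewrite /cap_lf => /mapP [i]; rewrite mem_filter mem_iota add0n => /andP [_ /andP [_ lt]] -> /=.
exact: (nonneg_of _ _ _ H (adC _ yC) lt).
Qed.

Lemma coefN_mem l p : BinNat.N.to_nat (coefN l p) <> 0%N -> exists2 x, x \in l & x.2 = p.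
Proof.
elim: l => [|x l IH] //=; case: eqP => [e _|_ /IH [y yl <-]].
  by exists x => //; rewrite inE eqxx.
by exists y => //; rewrite inE yl orbT.
Qed.

Lemma Msum_nat G : BinNat.N.to_nat (Msum G) = \sum_(x <- G) (BinNat.N.to_nat x.1.1 * size (mask x.2 x.1.2))%N.
Proof.
elim: G => [|x G IH]; first by rewrite big_nil.
by rewrite /= Nnat.N2Nat.inj_add Nnat.N2Nat.inj_mul Nnat.Nat2N.id IH big_cons.
Qed.

Lemma Usum_nat C : BinNat.N.to_nat (Usum C) = \sum_(x <- C) BinNat.N.to_nat x.1.1.
Proof.
elim: C => [|x C IH]; first by rewrite big_nil.
by rewrite /= Nnat.N2Nat.inj_add IH big_cons.
Qed.

Lemma cert_sound G C K num den gamma : check G C K num den -> achieves alg gamma ->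
  gamma <= (BinNat.N.to_nat num)%:R / (BinNat.N.to_nat den)%:R.
Proof.
rewrite /check => /andP [/andP [/andP [/andP [/andP [/andP [/andP [hG hC] uK] hK] hcoef] hM] hden] hfin] H.
have Mpos : (0 < BinNat.N.to_nat (Msum G))%N.
  apply/ssrnat.ltP; move/BinNat.N.ltb_lt: hM; Lia.lia.
have dpos : (0 < BinNat.N.to_nat den)%N.
  apply/ssrnat.ltP; move/BinNat.N.ltb_lt: hden; Lia.lia.
have fin : (BinNat.N.to_nat (Usum C) * BinNat.N.to_nat den <= BinNat.N.to_nat num * BinNat.N.to_nat (Msum G))%N.
  apply/ssrnat.leP; move/BinNat.N.leb_le: hfin; rewrite -!multE -!Nnat.N2Nat.inj_mul; Lia.lia.
have [gle0|ggt0] := leP gamma 0.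
  by apply: le_trans gle0 _; rewrite divr_ge0 // ler0n.
have hK1 : all (fun x => x.2 \in K) (A_lf G) by move: hK; rewrite all_cat => /andP [].
have hK2 : all (fun x => x.2 \in K) (B_lf C) by move: hK; rewrite all_cat => /andP [].
have S1 : gamma * (BinNat.N.to_nat (Msum G))%:R <= evl (A_lf G).
  rewrite Msum_nat /A_lf evl_flatten natr_sum mulr_sumr.
  rewrite !big_seq; apply: ler_sum => x xG; rewrite evl_val natrM mulrCA.
  apply: ler_wpM2l; first exact: ler0n.
  move/allP: hG => /(_ x xG) /and3P [ad sb mt].
  have [_ Hv] := H x.1.2 (size x.1.2) ad (leqnn _).
  rewrite take_size in Hv.
  apply: le_trans Hv; rewrite ler_pM2l // ler_nat; exact: nu_ge.
have S2 : evl (B_lf C) <= (BinNat.N.to_nat (Usum C))%:R.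
  rewrite Usum_nat /B_lf evl_flatten natr_sum !big_seq; apply: ler_sum => x xC.
  rewrite evl_cap -[leRHS]mulr1 ler_wpM2l ?ler0n //.
  by move/allP: hC => /(_ x xC) ad; apply: cap_le1 H ad.
have S3 : evl (A_lf G) <= evl (B_lf C).
  rewrite (evl_coef _ _ uK hK1) (evl_coef _ _ uK hK2) !big_seq; apply: ler_sum => p pK.
  have cle : (BinNat.N.to_nat (coefN (A_lf G) p) <= BinNat.N.to_nat (coefN (B_lf C) p))%N.
    move/allP: hcoef => /(_ p pK) /BinNat.N.leb_le hc; apply/ssrnat.leP; Lia.lia.
  have [e|ne] := eqVneq (BinNat.N.to_nat (coefN (B_lf C) p)) 0%N.
    by move: cle; rewrite e leqn0 => /eqP ->.
  have [x xB xp] := @coefN_mem (B_lf C) p (elimTF eqP (negbTE ne)).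
  have := @mem_B_nonneg gamma C x H hC xB; rewrite xp => ap.
  by apply: ler_wpM2r => //; rewrite ler_nat.
have G1 : gamma * (BinNat.N.to_nat (Msum G))%:R <= (BinNat.N.to_nat (Usum C))%:R.
  by apply: le_trans S1 _; apply: le_trans S3 S2.
have G2 : (BinNat.N.to_nat (Usum C))%:R * (BinNat.N.to_nat den)%:R <=
          (BinNat.N.to_nat num)%:R * (BinNat.N.to_nat (Msum G))%:R :> R.
  by rewrite -!natrM ler_nat.
rewrite ler_pdivlMr ?ltr0n // -(ler_pM2r (_ : 0 < (BinNat.N.to_nat (Msum G))%:R)) ?ltr0n //.
apply: le_trans G2; rewrite mulrAC; apply: ler_wpM2r; first exact: ler0n.
exact: G1.
Qed.

End Sound.
Import BinNums.
Definition certG : seq gent := [::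
  ((Npos (xI (xO (xI (xO (xO (xO (xO (xI (xI (xO (xI (xO (xO (xO (xI (xO xH))))))))))))))))), [::(0,0)], [::true]);
  ((Npos (xO (xI (xO (xO (xO (xO (xI (xI (xO (xI (xO (xO (xO (xI (xO xH)))))))))))))))), [::(0,0); (0,1); (0,2); (1,0)], [::false; true; false; true]);
  ((Npos (xO (xI (xO (xO (xO (xO (xI (xI (xO (xI (xO (xO (xO (xI (xO xH)))))))))))))))), [::(0,0); (0,1); (0,2); (1,0); (1,1); (0,3); (2,0)], [::false; false; true; false; true; false; true]);
  ((Npos (xO (xI (xO (xO (xO (xO (xI (xI (xO (xI (xO (xO (xO (xI (xO xH)))))))))))))))), [::(0,0); (0,1); (0,2); (1,0); (1,1); (0,3); (2,0); (1,2); (2,1); (3,0)], [::false; false; false; false; false; true; false; true; true; true]);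
  ((Npos (xO (xI (xO (xO (xO (xO (xI (xI (xO (xI (xO (xO (xO (xI (xO xH)))))))))))))))), [::(0,0); (0,1); (0,2); (1,0); (1,1); (0,3); (2,0); (1,2); (2,1); (3,1); (1,4); (2,2); (2,5); (4,0); (5,2)], [::false; false; false; false; false; true; false; false; false; true; true; false; true; true; true]);
  ((Npos (xO (xI (xO (xO (xO (xO (xI (xI (xO (xI (xO (xO (xO (xI (xO xH)))))))))))))))), [::(0,0); (0,1); (0,2); (1,0); (1,1); (0,3); (2,0); (1,2); (2,1); (3,1); (1,4); (2,2); (4,0)], [::false; false; false; false; false; true; false; false; false; true; true; true; true]);
  ((Npos (xO (xI (xO (xO (xO (xO (xI (xI (xO (xI (xO (xO (xO (xI (xO xH)))))))))))))))), [::(0,0); (0,1); (1,0)], [::false; true; true])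
].
Definition certC : seq cent := [::
  ((Npos (xI (xI (xO (xI (xO (xO (xO (xO (xI (xI (xO (xI (xO (xO (xO (xI (xO xH)))))))))))))))))), [::(0,0); (0,1); (0,2); (1,0); (1,1); (0,3); (2,0); (1,2); (1,4); (2,2); (2,1); (3,0); (4,1)], (true, 0));
  ((Npos (xI (xI (xO (xO (xO (xO (xI (xI (xO (xI (xO (xO (xO (xI (xO xH)))))))))))))))), [::(0,0); (0,1); (0,2); (1,0); (1,1); (0,3); (2,0); (1,2); (2,1); (3,0); (1,3); (2,2); (2,4); (4,1)], (false, 0));
  ((Npos (xO (xI (xI (xO (xO (xO (xO (xI (xI (xO (xI (xO (xO (xO (xI (xO xH))))))))))))))))), [::(0,0); (0,1); (0,2); (1,0); (1,1); (0,3); (2,0); (1,2); (2,1); (3,1); (1,3); (2,4); (4,0)], (false, 1));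
  ((Npos (xI (xI (xO (xO (xO (xO (xI (xI (xO (xI (xO (xO (xO (xI (xO xH)))))))))))))))), [::(0,0); (0,1); (0,2); (1,0); (1,1); (0,3); (2,0); (1,2); (2,1); (3,1); (1,4); (2,2); (2,5); (4,0); (5,2)], (true, 2));
  ((Npos (xI (xI (xO (xO (xO (xO (xI (xI (xO (xI (xO (xO (xO (xI (xO xH)))))))))))))))), [::(0,0); (0,1); (0,2); (1,0); (1,1); (0,3); (2,0); (1,2); (2,1); (3,1); (1,4); (2,2); (2,5); (4,0); (5,2)], (false, 0));
  ((Npos (xI (xI (xO (xO (xO (xO (xI (xI (xO (xI (xO (xO (xO (xI (xO xH)))))))))))))))), [::(0,0); (0,1); (0,2); (1,0); (1,1); (0,3); (2,0); (1,2); (2,1); (3,1); (1,4); (2,2); (2,5); (4,0); (5,2)], (false, 2));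
  ((Npos (xO (xI (xI (xO (xO (xO (xO (xI (xI (xO (xI (xO (xO (xO (xI (xO xH))))))))))))))))), [::(0,0); (0,1); (0,2); (1,0); (1,1); (0,3); (2,0); (1,2); (2,1); (3,1); (1,4); (2,2); (4,0)], (true, 1));
  ((Npos (xI (xI (xO (xO (xO (xO (xI (xI (xO (xI (xO (xO (xO (xI (xO xH)))))))))))))))), [::(0,0); (0,1); (0,2); (1,0); (1,1); (0,3); (2,0); (1,2); (2,1); (3,1); (1,4); (2,2); (4,0)], (false, 0));
  ((Npos (xI (xI (xO (xO (xO (xO (xI (xI (xO (xI (xO (xO (xO (xI (xO xH)))))))))))))))), [::(0,0); (0,1); (1,0)], (false, 0))
].
Definition certK : seq (seq edge) := [::
  [::(0,0)];
  [::(0,0); (0,1)];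
  [::(0,0); (0,1); (0,2)];
  [::(0,0); (0,1); (1,0)];
  [::(0,0); (0,1); (0,2); (1,0)];
  [::(0,0); (0,1); (0,2); (1,0); (1,1)];
  [::(0,0); (0,1); (0,2); (1,0); (1,1); (0,3)];
  [::(0,0); (0,1); (0,2); (1,0); (1,1); (0,3); (2,0)];
  [::(0,0); (0,1); (0,2); (1,0); (1,1); (0,3); (2,0); (1,2)];
  [::(0,0); (0,1); (0,2); (1,0); (1,1); (0,3); (2,0); (1,2); (2,1)];
  [::(0,0); (0,1); (0,2); (1,0); (1,1); (0,3); (2,0); (1,2); (2,1); (3,0)];
  [::(0,0); (0,1); (0,2); (1,0); (1,1); (0,3); (2,0); (1,2); (2,1); (3,1)];
  [::(0,0); (0,1); (0,2); (1,0); (1,1); (0,3); (2,0); (1,2); (2,1); (3,1); (1,4)];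
  [::(0,0); (0,1); (0,2); (1,0); (1,1); (0,3); (2,0); (1,2); (2,1); (3,1); (1,4); (2,2)];
  [::(0,0); (0,1); (0,2); (1,0); (1,1); (0,3); (2,0); (1,2); (2,1); (3,1); (1,4); (2,2); (2,5)];
  [::(0,0); (0,1); (0,2); (1,0); (1,1); (0,3); (2,0); (1,2); (2,1); (3,1); (1,4); (2,2); (4,0)];
  [::(0,0); (0,1); (0,2); (1,0); (1,1); (0,3); (2,0); (1,2); (2,1); (3,1); (1,4); (2,2); (2,5); (4,0)];
  [::(0,0); (0,1); (0,2); (1,0); (1,1); (0,3); (2,0); (1,2); (2,1); (3,1); (1,4); (2,2); (2,5); (4,0); (5,2)]
].

Definition numN : NN := (Npos (xO (xI (xO xH)))).
Definition denN : NN := (Npos (xI (xO (xO (xO xH))))).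
Lemma check_ok : check certG certC certK numN denN = true.
Proof. vm_compute. reflexivity. Qed.
Lemma numN_nat : BinNat.N.to_nat numN = 10%N. Proof. reflexivity. Qed.
Lemma denN_nat : BinNat.N.to_nat denN = 17%N. Proof. reflexivity. Qed.
End Cert.

Lemma second_part (R : realType) :
  (forall (alg : online_alg R) (gamma : R),
      achieves alg gamma -> gamma <= 58884%:R / 100000%:R) ->
  (forall alg : online_alg R,
      ~ achieves alg (4%:R / (9%:R - Num.sqrt 5%:R))).
Proof.
move=> P alg H; have := P alg _ H.
set s := Num.sqrt 5%:R.
have s0 : 0 <= s by apply: sqrtr_ge0.
have s2 : s * s = 5%:R by rewrite -expr2 sqr_sqrtr // ler0n.
have sa : 2207%:R / 1000%:R < s by nra.
have d0 : 0 < 9%:R - s by nra.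
set g := 4%:R / (9%:R - s).
have gd : g * (9%:R - s) = 4%:R by rewrite /g divfK // gt_eqF.
move=> hg.
have : g * (9%:R - s) <= 58884%:R / 100000%:R * (9%:R - s) by apply: ler_wpM2r; [apply: ltW|].
rewrite gd; lra.
Qed.

Theorem mainTheorem3 (R : realType) :
  (forall (alg : online_alg R) (gamma : R),
      achieves alg gamma -> gamma <= 58884%:R / 100000%:R) /\
  (forall alg : online_alg R,
      ~ achieves alg (4%:R / (9%:R - Num.sqrt 5%:R))).
Proof.
have P1 : forall (alg : online_alg R) (gamma : R),
    achieves alg gamma -> gamma <= 58884%:R / 100000%:R.
  move=> alg gamma H.
  have := @Cert.cert_sound R alg _ _ _ _ _ gamma Cert.check_ok H; rewrite Cert.numN_nat Cert.denN_nat => h.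
  apply: le_trans h _; lra.
by split; [exact: P1 | exact: second_part].
Qed.
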